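(* For every even integer $n\ge 6$ there exists an $n$-intersection polished graph with exactly $n^2/4+3n/2$ vertices that has at least $2^{n/2}$ maximal cliques. Consequently, there is an infinite family of graphs $G$, each $k$-intersection polished for a suitable $k$ depending on $G$, whose number of maximal cliques is exponential in $\sqrt{|V(G)|}$.
   Context: All graphs are finite and simple. For a vertex $v$, $N[v]$ denotes its closed neighbourhood (the set of neighbours of $v$ together with $v$). For an integer $k$, $P^k(G)$ is the graph on the same vertex set as $G$ in which two distinct vertices $u,v$ are adjacent if and only if $|N[u]\cap N[v]|\ge k$, the closed neighbourhoods being taken in $G$. A graph $G$ is called $k$-intersection polished if $P^k(G)=G$. A clique is a set of pairwise adjacent vertices; it is maximal if it is not properly contained in another clique. *)

(* Defs.v *)
From mathcomp Require Import all_boot.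
Set Implicit Arguments. Unset Strict Implicit. Unset Printing Implicit Defensive.

Definition simple_graph (T : finType) (e : rel T) : Prop :=
  irreflexive e /\ symmetric e.

Definition cnbhd (T : finType) (e : rel T) (v : T) : {set T} :=
  [set u | (u == v) || e v u].

Definition Pk (T : finType) (e : rel T) (k : nat) : rel T :=
  fun u v => (u != v) && (k <= #|cnbhd e u :&: cnbhd e v|).

Definition intersection_polished (T : finType) (e : rel T) (k : nat) : Prop :=
  forall u v, Pk e k u v = e u v.

Definition is_clique (T : finType) (e : rel T) (A : {set T}) : bool :=
  [forall x in A, forall y in A, (x != y) ==> e x y].

Definition is_maximal_clique (T : finType) (e : rel T) (A : {set T}) : bool :=
  maxset (is_clique e) A.

Definition num_maximal_cliques (T : finType) (e : rel T) : nat :=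
  #|[set A : {set T} | is_maximal_clique e A]|.

(* Main.v *)
Require Import Defs.
From mathcomp Require Import all_boot zify.
Set Implicit Arguments. Unset Strict Implicit. Unset Printing Implicit Defensive.

Lemma count_max (T S : finType) (e : rel T) (A : S -> {set T}) :
  (forall s, is_clique e (A s)) ->
  (forall s s', s != s' -> exists x y, [/\ x \in A s, y \in A s', x != y & ~~ e x y]) ->
  #|S| <= num_maximal_cliques e.
Proof.
move=> Hc Hd.
have MS s : {M | is_maximal_clique e M & A s \subset M} := maxset_exists (Hc s).
pose M s := s2val (MS s).
have MP s : is_maximal_clique e (M s) /\ A s \subset M s.
  rewrite /M; case: (MS s) => /= B h1 h2; split; [exact h1 | exact h2].
have Minj : injective M.
  move=> s s' Ess; apply/eqP; apply/negP => /negP Hne.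
  have [x [y [Hx Hy Hxy Hn]]] := Hd _ _ Hne.
  have [m1 s1] := MP s; have [m2 s2] := MP s'.
  have xM : x \in M s by apply: (subsetP s1).
  have yM : y \in M s by rewrite Ess; apply: (subsetP s2).
  have := maxsetp m1.
  move=> /forallP /(_ x) /implyP /(_ xM) /forallP /(_ y) /implyP /(_ yM).
  by rewrite Hxy (negbTE Hn).
idtac "c".
rewrite /num_maximal_cliques -cardsT -(card_imset _ Minj).
idtac "d".
apply: subset_leq_card; apply/subsetP => B /imsetP [s _ ->].
rewrite inE; exact: (proj1 (MP s)).
Qed.
Section Transfer.
Variables (V : finType) (N : nat) (H : #|V| = N) (e : rel V).
Definition gN (i : 'I_N) : V := enum_val (cast_ord (esym H) i).
Definition fN (v : V) : 'I_N := cast_ord H (enum_rank v).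
Lemma fNK : cancel fN gN.
Proof. by move=> v; rewrite /gN /fN cast_ordK enum_rankK. Qed.
Lemma gNK : cancel gN fN.
Proof. by move=> i; rewrite /gN /fN enum_valK cast_ordKV. Qed.
Definition eN : rel 'I_N := fun x y => e (gN x) (gN y).

Lemma cnbhdN x : cnbhd eN x = fN @: cnbhd e (gN x).
Proof.
rewrite (can2_imset_pre _ fNK gNK); apply/setP => u.
by rewrite !inE /eN (can_eq gNK).
Qed.

Lemma simpleN : simple_graph e -> simple_graph eN.
Proof. by case=> Hi Hs; split => [x|x y]; rewrite /eN; [rewrite Hi | rewrite Hs]. Qed.

Lemma polishedN k : intersection_polished e k -> intersection_polished eN k.
Proof.
move=> Hp u v; rewrite /eN -Hp /Pk !cnbhdN -imsetI; last first.
  by move=> a b _ _; apply: (can_inj fNK).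
by rewrite card_imset ?(can_eq gNK) //; apply: (can_inj fNK).
Qed.
End Transfer.

Section Cons.
Variable m : nat.
Definition V := ('I_m * bool + 'I_m.+1 * 'I_m)%type.
Definition bit (t : 'I_m.+1) (i : 'I_m) : bool := (0 < t) && (i.+1 != t).
Definition adj : rel V := fun x y =>
  match x, y with
  | inl p, inl q => p.1 != q.1
  | inl p, inr q => p.2 == bit q.1 p.1
  | inr q, inl p => p.2 == bit q.1 p.1
  | inr q, inr q' => (q.1 == q'.1) && (q.2 != q'.2)
  end.
Definition Bt t : {set V} :=
  [set w | match w with inl p => p.2 == bit t p.1 | inr q => q.1 == t end].

Lemma adj_simple : simple_graph adj.
Proof.
split.
  by case=> [[i b]|[t k]] /=; rewrite ?eqxx.
case=> [[i b]|[t k]] [[j c]|[s l]] //=; by rewrite eq_sym // [l == _]eq_sym.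
Qed.

Lemma card_Bt t : m * 2 <= #|Bt t|.
Proof.
pose h (x : 'I_m + 'I_m) : V :=
  match x with inl i => inl (i, bit t i) | inr k => inr (t, k) end.
have hinj : injective h.
  by case=> [i|k] [j|l] //= [] ->.
have -> : m * 2 = #|h @: setT|.
  by rewrite card_imset // cardsT card_sum card_ord; lia.
apply: subset_leq_card; apply/subsetP => w /imsetP [[i|k] _ ->]; by rewrite inE /= eqxx.
Qed.

Lemma Bt_clique t x y : x \in Bt t -> y \in Bt t -> x != y -> adj x y.
Proof.
rewrite !inE; case: x => [[i b]|[s k]]; case: y => [[j c]|[s' l]] //=.
- move=> /eqP -> /eqP ->; apply: contra => /eqP E; by rewrite E.
- by move=> /eqP -> /eqP ->.
- by move=> /eqP -> /eqP ->.
- by move=> /eqP -> /eqP -> ; rewrite eqxx /=; apply: contra => /eqP ->.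
Qed.

Lemma Bt_sub t w : w \in Bt t -> Bt t \subset cnbhd adj w.
Proof.
move=> Hw; apply/subsetP => y Hy; rewrite inE.
case: (eqVneq y w) => //= ne; apply: (Bt_clique Hw Hy); by rewrite eq_sym.
Qed.

Lemma both_true (Hm : 3 <= m) i j : exists t, bit t i && bit t j.
Proof.
pose t0 := if (i != 0 :> nat) && (j != 0 :> nat) then 1 else if (i != 1 :> nat) && (j != 1 :> nat) then 2 else 3.
have lt0 : t0 < m.+1 by rewrite /t0; repeat case: ifP => ?; lia.
exists (inord t0); rewrite /bit inordK //.
rewrite /t0; repeat case: ifP => ?; lia.
Qed.

Lemma adj_common (Hm : 3 <= m) u v : adj u v -> exists t, (u \in Bt t) && (v \in Bt t).
Proof.
case: u => [[i b]|[s k]]; case: v => [[j c]|[s' l]] /= H.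
- case: b; case: c.
  + have [t Ht] := both_true Hm i j; exists t; rewrite !inE /=; case/andP: Ht => -> ->; done.
  + exists (@Ordinal m.+1 j.+1 (ltn_ord j)); rewrite !inE /= /bit /=.
    rewrite eqSS eq_sym H /=; by rewrite eqxx.
  + exists (@Ordinal m.+1 i.+1 (ltn_ord i)); rewrite !inE /= /bit /=.
    rewrite eqxx eqSS /=; have H2 : (j != i :> nat) by rewrite eq_sym. by rewrite H2.
  + by exists ord0; rewrite !inE /= /bit.
- by exists s'; rewrite !inE /= H eqxx.
- by exists s; rewrite !inE /= H eqxx.
- case/andP: H => /eqP <- _; by exists s; rewrite !inE /= eqxx.
Qed.

Definition img t : {set V} := [set inl (j, bit t j) | j : 'I_m].
Lemma card_img t : #|img t| <= m.
Proof. apply: leq_trans (leq_imset_card _ _) _; by rewrite ?cardsT card_ord. Qed.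

Lemma inlE (A B : eqType) (a b : A) : (@inl A B a == inl b) = (a == b). Proof. by []. Qed.
Lemma inrE (A B : eqType) (a b : B) : (@inr A B a == inr b) = (a == b). Proof. by []. Qed.
Lemma inlrE (A B : eqType) (a : A) (b : B) : (inl a == inr b) = false. Proof. by []. Qed.
Lemma inrlE (A B : eqType) (a : A) (b : B) : (inr b == inl a) = false. Proof. by []. Qed.

Lemma lt_lr (Hm : 0 < m) i b s' l : b != bit s' i ->
  #|cnbhd adj (inl (i, b)) :&: cnbhd adj (inr (s', l))| < m * 2.
Proof.
move=> Ha.
apply: (leq_ltn_trans (n := #|img s'|)); last by apply: leq_ltn_trans (card_img _) _; lia.
apply: subset_leq_card; apply/subsetP => w; rewrite !inE.
case: w => [[j c]|[t r]] /=; rewrite ?inlE ?inrE ?inlrE ?inrlE ?xpair_eqE /=.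
- by move=> /andP [_ /eqP ->]; apply/imsetP; exists j.
- move=> /andP [Hb H2]; have Et : t = s'.
    by case/orP: H2 => [/andP [/eqP -> _] | /andP [/eqP -> _]].
  by rewrite Et in Hb; rewrite Hb in Ha.
Qed.

Lemma nonadj_lt (Hm : 0 < m) u v : u != v -> ~~ adj u v ->
  #|cnbhd adj u :&: cnbhd adj v| < m * 2.
Proof.
case: u => [[i b]|[s k]]; case: v => [[j c]|[s' l]] /= Hne Ha.
- move/negPn/eqP: Ha => Eij; subst j.
  have Hbc : b != c by apply: contraNneq Hne => ->.
  have cS : #|[set inl p | p : 'I_m * bool] : {set V}| = m * 2.
    rewrite card_imset ?card_prod ?card_ord ?card_bool //.
    by move=> x y [].
  have := cardsD1 (inl (i, b)) ([set inl p | p : 'I_m * bool] : {set V}).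
  rewrite cS imset_f // add1n => E.
  have : #|([set inl p | p : 'I_m * bool] : {set V}) :\ inl (i, b)| < m * 2 by rewrite E.
  apply: leq_ltn_trans; apply: subset_leq_card; apply/subsetP => w; rewrite !inE.
  case: w => [[j d]|[t r]] /=; rewrite ?inlE ?inrE ?inlrE ?inrlE ?xpair_eqE /=.
  + move=> /andP [H1 H2]; apply/andP; split; last by apply/imsetP; exists (j, d).
    apply/negP => /andP [/eqP Ej /eqP Ed]; subst j d.
    by move: H2; rewrite eqxx (negbTE Hbc).
  + by move=> /andP [/eqP Hb /eqP Hc]; move: Hbc; rewrite Hb Hc eqxx.
- exact: lt_lr.
- by rewrite setIC; apply: lt_lr.
- have Hss : s != s'.
    apply: contraNneq Ha => Es; subst s'; rewrite eqxx /=.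
    by apply: contraNneq Hne => ->.
  apply: (leq_ltn_trans (n := #|img s|)); last by apply: leq_ltn_trans (card_img _) _; lia.
  apply: subset_leq_card; apply/subsetP => w; rewrite !inE.
  case: w => [[j c]|[t r]] /=; rewrite ?inlE ?inrE ?inlrE ?inrlE ?xpair_eqE /=.
  + by move=> /andP [/eqP -> _]; apply/imsetP; exists j.
  + move=> /andP [H1 H2].
    have E1 : t = s by case/orP: H1 => /andP [/eqP -> _].
    have E2 : t = s' by case/orP: H2 => /andP [/eqP -> _].
    by move: Hss; rewrite -E1 -E2 eqxx.
Qed.

Lemma adj_polished (Hm : 3 <= m) : intersection_polished adj (m * 2).
Proof.
move=> u v; rewrite /Pk.
case Huv: (adj u v).
- have [t /andP [Hu Hv]] := adj_common Hm Huv.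
  have ne : u != v by apply: contraTneq Huv => ->; rewrite (proj1 adj_simple).
  rewrite ne /=; apply: leq_trans (card_Bt t) _; apply: subset_leq_card.
  by rewrite subsetI !Bt_sub.
- case: (eqVneq u v) => //= ne; apply/negbTE; rewrite -ltnNge.
  by apply: nonadj_lt => //; [lia | rewrite Huv].
Qed.
End Cons.

Theorem theorem4 (n : nat) (Hn : 6 <= n) (Heven : ~~ odd n) :
  exists e : rel 'I_(n * n %/ 4 + 3 * n %/ 2),
    [/\ simple_graph e, intersection_polished e n
      & 2 ^ (n %/ 2) <= num_maximal_cliques e].
Proof.
have [m Em] : exists m, n = m * 2.
  by exists n./2; rewrite muln2 -{1}(odd_double_half n) (negbTE Heven).
subst n; have Hm : 3 <= m by lia.
have HV : #|{: V m}| = m * 2 * (m * 2) %/ 4 + 3 * (m * 2) %/ 2.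
  rewrite card_sum !card_prod !card_ord card_bool; lia.
exists (eN HV (@adj m)); split.
- exact: simpleN (adj_simple m).
- exact: polishedN (adj_polished Hm).
have -> : m * 2 %/ 2 = m by lia.
pose A (f : {ffun 'I_m -> bool}) : {set V m} := [set inl (i, f i) | i : 'I_m].
have -> : 2 ^ m = #|{ffun 'I_m -> bool}| by rewrite card_ffun card_bool card_ord.
apply: (count_max (A := fun f => fN HV @: A f)).
- move=> f; apply/forallP => x; apply/implyP => /imsetP [a Ha ->].
  apply/forallP => y; apply/implyP => /imsetP [b Hb ->]; apply/implyP.
  rewrite (can_eq (fNK HV)) /eN !fNK.
  move: Ha Hb => /imsetP [i _ ->] /imsetP [j _ ->] Hne /=.
  by apply: contraNneq Hne => ->.
- move=> s s' Hne.
  have : ~~ [forall i, s i == s' i].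
    by apply: contra Hne => /forallP H; apply/eqP/ffunP => i; apply/eqP.
  rewrite negb_forall => /existsP [i Hi].
  exists (fN HV (inl (i, s i))), (fN HV (inl (i, s' i))); split.
  + by apply: imset_f; apply: imset_f.
  + by apply: imset_f; apply: imset_f.
  + by rewrite (can_eq (fNK HV)) inlE xpair_eqE eqxx.
  + by rewrite /eN !fNK /= eqxx.
Qed.
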